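(* Every Bohr regular Lawson paratopological group is a topological group.
   Context: All topological spaces are Hausdorff. A paratopological group is a group with a Hausdorff topology making multiplication continuous; a topological group additionally has continuous inversion. A paratopological group is Lawson if it has a neighborhood base at the unit consisting of subsemigroups. A topological group $K$ is totally bounded if for each neighborhood $U$ of the unit there is a finite $F$ with $FU=UF=K$. A continuous map $h:X\to Y$ is regular if for each $x\in X$ and neighborhood $U$ of $x$ there is a closed $F\subset Y$ such that $h^{-1}(F)$ is a closed neighborhood of $x$ contained in $U$. A paratopological group is Bohr regular if it admits a regular continuous homomorphism onto a totally bounded topological group. *)

(* Defs.v *)
From HB Require Import structures.
From mathcomp Require Import all_boot monoid.
From mathcomp Require Import all_classical topology.

Set Implicit Arguments.
Unset Strict Implicit.
Unset Printing Implicit Defensive.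

Local Open Scope classical_set_scope.
Local Open Scope group_scope.

#[short(type="topGroupType")]
HB.structure Definition TopGroup := {G of Group G & Topological G}.

Definition paratopological_group (G : topGroupType) : Prop :=
  hausdorff_space G /\ continuous (fun p : G * G => (p.1 * p.2)%g).

Definition topological_group (G : topGroupType) : Prop :=
  paratopological_group G /\ continuous (fun x : G => (x^-1)%g).

Definition subsemigroup (G : topGroupType) (V : set G) : Prop :=
  forall x y, V x -> V y -> V (x * y)%g.

Definition lawson (G : topGroupType) : Prop :=
  forall U : set G, nbhs (1%g : G) U ->
    exists V : set G, [/\ nbhs (1%g : G) V, V `<=` U & subsemigroup V].

Definition totally_bounded_group (K : topGroupType) : Prop :=
  forall U : set K, nbhs (1%g : K) U ->
    exists F : set K, [/\ finite_set F,
      (forall x : K, exists f u, [/\ F f, U u & x = (f * u)%g]) &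
      (forall x : K, exists u f, [/\ U u, F f & x = (u * f)%g])].

Definition regular_map (X Y : topologicalType) (h : X -> Y) : Prop :=
  forall (x : X) (U : set X), nbhs x U ->
    exists F : set Y, [/\ closed F, closed (h @^-1` F), nbhs x (h @^-1` F)
                        & h @^-1` F `<=` U].

Definition group_hom (G K : topGroupType) (h : G -> K) : Prop :=
  forall x y : G, h (x * y)%g = (h x * h y)%g.

Definition bohr_regular (G : topGroupType) : Prop :=
  exists (K : topGroupType) (h : G -> K),
    [/\ topological_group K, totally_bounded_group K, group_hom h,
        continuous h /\ regular_map h & (forall k : K, exists x : G, h x = k)].

(* Main.v *)
Require Import Defs.
From HB Require Import structures.
From mathcomp Require Import all_boot monoid.
From mathcomp Require Import all_classical topology.
Local Open Scope classical_set_scope.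
Local Open Scope group_scope.
Set Implicit Arguments.
Unset Strict Implicit.

Lemma mul_box (G : topGroupType) (a b : G) (U : set G) :
  continuous (fun p : G * G => (p.1 * p.2)%g) -> nbhs (a * b) U ->
  exists A B, [/\ nbhs a A, nbhs b B & forall x y, A x -> B y -> U (x * y)].
Proof.
move=> hc hU.
have := hc (a, b) U hU.
case=> [[A B]] /= [nA nB] sub.
exists A, B; split => // x y Ax By.
exact: (sub (x, y)).
Qed.

Lemma pigeon (T : Type) (F : set T) (c : nat -> T) :
  finite_set F -> (forall n, F (c n)) -> exists i j, (i < j)%N /\ c i = c j.
Proof.
move=> fF Fc; apply: contrapT => hn.
have inj : {in [set: nat] &, injective c}.
  move=> i j _ _ eij; case: (ltngtP i j) => // hij; exfalso; apply: hn.
  - by exists i, j.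
  - by exists j, i.
have fi : finite_set (c @` [set: nat]).
  by apply: (sub_finite_set _ fF) => _ [n _ <-].
apply: infinite_nat; apply: (card_le_finite _ fi).
by have /card_eqPle[_] := inj_card_eq inj.
Qed.

Lemma hom1 (G K : topGroupType) (h : G -> K) : group_hom h -> h 1 = 1.
Proof.
move=> hh; have := hh 1 1; rewrite mulg1 => e.
by apply: (mulIg (h 1)); rewrite mul1g -e.
Qed.

Lemma homV (G K : topGroupType) (h : G -> K) x : group_hom h -> h x^-1 = (h x)^-1.
Proof.
move=> hh; apply: (mulgI (h x)); by rewrite -hh !mulgV hom1.
Qed.

Lemma homX (G K : topGroupType) (h : G -> K) x n : group_hom h ->
  h (x ^+ n.+1) = (h x) ^+ n.+1.
Proof.
move=> hh; elim: n => [//|n IH]; by rewrite expgS hh IH -expgS.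
Qed.

Lemma semiX (G : topGroupType) (V : set G) x n : subsemigroup V -> V x -> V (x ^+ n.+1).
Proof.
move=> sV Vx; elim: n => [//|n IH]; rewrite expgS; exact: sV.
Qed.

Lemma lmul_nbhs (G : topGroupType) (a b : G) (U : set G) :
  continuous (fun p : G * G => (p.1 * p.2)%g) -> nbhs (a * b) U ->
  nbhs b [set y | U (a * y)].
Proof.
move=> hc /(mul_box hc) [A [B [nA nB sub]]].
apply: filterS nB => y By; apply: sub => //; exact: nbhs_singleton.
Qed.

Lemma rmul_nbhs (G : topGroupType) (a b : G) (U : set G) :
  continuous (fun p : G * G => (p.1 * p.2)%g) -> nbhs (a * b) U ->
  nbhs a [set y | U (y * b)].
Proof.
move=> hc /(mul_box hc) [A [B [nA nB sub]]].
apply: filterS nA => y Ay; apply: sub => //; exact: nbhs_singleton.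
Qed.

Lemma recurrence (K : topGroupType) (s : K) (W : set K) :
  topological_group K -> totally_bounded_group K -> nbhs 1 W ->
  exists n, (0 < n)%N /\ W (s ^+ n).
Proof.
move=> [[_ hc] hi] tb nW.
rewrite -(mulg1 (1:K)) in nW.
have [A [B [nA nB sub]]] := mul_box hc nW.
have nA' : nbhs (1 : K) [set u | A u^-1].
  rewrite -invg1 in nA; exact: (hi 1 _ nA).
have nW' : nbhs (1 : K) ([set u | A u^-1] `&` B) by apply: filterI.
have [F [fF cov _]] := tb _ nW'.
have : forall n, exists p : K * K, [/\ F p.1, ([set u | A u^-1] `&` B) p.2 & s ^+ n = p.1 * p.2].
  move=> n; have [f [u [Ff Uu e]]] := cov (s ^+ n); by exists (f, u).
move=> /choice [c hc'].
have [i [j [lij eij]]] := @pigeon _ _ (fun n => (c n).1) fF (fun n => let: And3 a _ _ := hc' n in a).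
exists (j - i)%N; split; first by rewrite subn_gt0.
have := hc' i; have := hc' j; rewrite -eij.
case: (c i) => f u; case: (c j) => f' u' /= [_ [_ Bu'] ej] [_ [Au _] ei].
have -> : s ^+ (j - i) = (s ^+ i)^-1 * s ^+ j.
  by rewrite -(subnKC (ltnW lij)) expgnDr mulKg addKn.
rewrite ei ej invgM -mulgA mulKg; exact: sub.
Qed.

Lemma small_inv (G : topGroupType) : paratopological_group G -> lawson G -> bohr_regular G ->
  forall U : set G, nbhs 1 U -> exists V : set G, nbhs 1 V /\ forall v, V v -> U v^-1.
Proof.
move=> _ law [K [h [tg tb hh [hcont hreg] hsurj]]] U nU.
have [F [cF _ nF sF]] := hreg 1 U nU.
have [V [nV sV semV]] := law _ nF.
exists V; split => // v Vv.
apply: sF; rewrite /preimage /= homV //.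
rewrite ((closure_id F).1 cF).
move=> B nB.
have [[_ hcK] hiK] := tg.
have nW : nbhs (1 : K) [set w | B ((h v)^-1 * w)].
  by apply: lmul_nbhs hcK _; rewrite mulg1.
have [[|n'] [n0 Wn]] := recurrence (h v ^+ 2) tg tb nW; first by [].
exists (h v ^+ (2 * n').+1); split.
  rewrite -homX //; apply: sV; exact: semiX.
move: Wn => /=; rewrite -expgnA mulnS addSn addSn add0n expgS mulKg.
done.
Qed.

Theorem corollary8 (G : topGroupType) :
  paratopological_group G -> lawson G -> bohr_regular G -> topological_group G.
Proof.
move=> pg law br; split => // x U nU.
have [_ hc] := pg.
have nU1 : nbhs (1 : G) [set w | U (w * x^-1)].
  by apply: rmul_nbhs hc _; rewrite mul1g.
have [V [nV sV]] := small_inv pg law br nU1.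
have nX : nbhs x [set y | V (x^-1 * y)].
  by apply: lmul_nbhs hc _; rewrite mulVg.
apply: filterS nX => y /sV /=.
by rewrite invgM invgK -mulgA mulgV mulg1.
Qed.
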